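(* Let $m\ge0$ be an integer and assume (A1) and (A2) from the context. Consider the system of equations in the unknowns $\{A(j),k_i(j)\}_{N_0\le j\le N_0+m,\,1\le i\le j}$ consisting of the terminal conditions $$A(N_0+m)=\frac{1}{\beta_\Sigma(N_0+m)},\qquad k_i(N_0+m)=\frac{\beta_i(N_0+m)A(N_0+m)-1}{\alpha_i}\quad(1\le i\le N_0+m),$$ and, for $N_0\le j<N_0+m$ and $1\le i\le j$, $$\frac{1}{A(j)}=\beta_\Sigma(j)+\lambda-\Big(\alpha_\Sigma(j)\sum_{i=1}^j\frac{\lambda A(j+1)e^{-\alpha_i(k_i(j+1)-k_i(j))}}{\alpha_i}\Big)\frac{1}{A(j)},\qquad k_i(j)=\frac{(\beta_i(j)+\lambda)A(j)-1}{\alpha_i}-\frac{\lambda A(j+1)e^{-\alpha_i(k_i(j+1)-k_i(j))}}{\alpha_i}.$$ Then this system has a unique solution with $A(j)>0$ for all $N_0\le j\le N_0+m$, and this solution satisfies, for $N_0\le j\le N_0+m$ and $1\le i\le j$, $$\frac{1}{\overline{\beta}+\lambda}<A(j)\le\frac{1}{\underline{\beta}},\qquad A(j)e^{-\alpha_ik_i(j)}\le\frac{1}{\underline{\beta}},\qquad -\ln\Big(\frac{\overline{\beta}+\lambda}{\underline{\beta}}\Big)\le\alpha_ik_i(j)\le\frac{\overline{\beta}+\lambda}{\underline{\beta}}-1.$$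
   Context: $N_0\ge1$ is an integer, $\lambda>0$, and for each $i\in\mathbb{N}$, $\alpha_i>0$, $\rho_i>0$, and $\mu_i(j),\sigma_i(j)\in\mathbb{R}$ for $j\ge N_0\vee i$. Define $\alpha_\Sigma(j):=(\sum_{i=1}^j1/\alpha_i)^{-1}$, $\beta_i(j):=\rho_i+\alpha_i\mu_i(j)-\frac12\alpha_i^2\sigma_i^2(j)$, $\beta_\Sigma(j):=\alpha_\Sigma(j)\sum_{i=1}^j\beta_i(j)/\alpha_i$. Assumptions: (A1) for each $i$, $\{\mu_i(j)\}_{j\ge N_0\vee i}$ and $\{\sigma_i(j)\}_{j\ge N_0\vee i}$ are bounded; (A2) there are constants $0<\underline{\beta}\le\overline{\beta}$ with $\underline{\beta}\le\beta_i(j)\le\overline{\beta}$ for all $j\ge N_0$, $1\le i\le j$. *)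

(* Defs.v *)
From Stdlib Require Import Reals Lra Lia.
Open Scope R_scope.

Fixpoint sumR (f : nat -> R) (j : nat) : R :=
  match j with
  | O => 0
  | S j' => sumR f j' + f j
  end.

Definition alphaSigma (alpha : nat -> R) (j : nat) : R :=
  / sumR (fun i => / alpha i) j.

Definition beta (alpha rho : nat -> R) (mu sigma : nat -> nat -> R)
  (i j : nat) : R :=
  rho i + alpha i * mu i j - / 2 * alpha i ^ 2 * (sigma i j) ^ 2.

Definition betaSigma (alpha rho : nat -> R) (mu sigma : nat -> nat -> R)
  (j : nat) : R :=
  alphaSigma alpha j * sumR (fun i => beta alpha rho mu sigma i j / alpha i) j.

Definition IsSolution (N0 m : nat) (lambda : R) (alpha rho : nat -> R)
  (mu sigma : nat -> nat -> R) (A : nat -> R) (k : nat -> nat -> R) : Prop :=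
  let bS := betaSigma alpha rho mu sigma in
  let b := beta alpha rho mu sigma in
  A (N0 + m)%nat = / bS (N0 + m)%nat /\
  (forall i : nat, (1 <= i <= N0 + m)%nat ->
     k i (N0 + m)%nat = (b i (N0 + m)%nat * A (N0 + m)%nat - 1) / alpha i) /\
  (forall j : nat, (N0 <= j < N0 + m)%nat ->
     / A j = bS j + lambda
             - (alphaSigma alpha j *
                sumR (fun i => lambda * A (S j)
                                 * exp (- (alpha i * (k i (S j) - k i j)))
                                 / alpha i) j) * / A j) /\
  (forall j i : nat, (N0 <= j < N0 + m)%nat -> (1 <= i <= j)%nat ->
     k i j = ((b i j + lambda) * A j - 1) / alpha i
             - lambda * A (S j) * exp (- (alpha i * (k i (S j) - k i j)))
               / alpha i).

(* Main.v *)
Require Import Defs.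
From Stdlib Require Import Reals Lra Lia ClassicalEpsilon.
Open Scope R_scope.

Lemma sumR_ext (f g : nat -> R) (j : nat) :
  (forall i, (1 <= i <= j)%nat -> f i = g i) -> sumR f j = sumR g j.
Proof.
  induction j; intros H; simpl; auto.
  rewrite IHj by (intros; apply H; lia). rewrite H by lia. reflexivity.
Qed.

Lemma sumR_lt (f g : nat -> R) (j : nat) : (1 <= j)%nat ->
  (forall i, (1 <= i <= j)%nat -> f i < g i) -> sumR f j < sumR g j.
Proof.
  induction j; intros Hj H; [lia|]. simpl.
  destruct j.
  - simpl. specialize (H 1%nat ltac:(lia)). lra.
  - assert (sumR f (S j) < sumR g (S j)) by (apply IHj; [lia| intros; apply H; lia]).
    specialize (H (S (S j)) ltac:(lia)). lra.
Qed.

Lemma sumR_le (f g : nat -> R) (j : nat) :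
  (forall i, (1 <= i <= j)%nat -> f i <= g i) -> sumR f j <= sumR g j.
Proof.
  induction j; intros H; simpl; [lra|].
  assert (sumR f j <= sumR g j) by (apply IHj; intros; apply H; lia).
  specialize (H (S j) ltac:(lia)). lra.
Qed.

Lemma sumR_zero j : sumR (fun _ => 0) j = 0.
Proof. induction j; simpl; [auto| rewrite IHj; ring]. Qed.

Lemma sumR_lin (b al kk : nat -> R) (a lam : R) j :
  sumR (fun i => ((b i + lam) * a - 1) / al i - kk i) j =
  a * sumR (fun i => b i / al i) j + (lam * a - 1) * sumR (fun i => / al i) j - sumR kk j.
Proof.
  induction j; simpl; [ring|]. rewrite IHj. unfold Rdiv. ring.
Qed.

Lemma sumR_scal (f : nat -> R) c j : sumR (fun i => c * f i) j = c * sumR f j.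
Proof. induction j; simpl; [ring| rewrite IHj; ring]. Qed.

Lemma g_le d x y : 0 <= d -> x <= y -> x + d * exp x <= y + d * exp y.
Proof.
  intros Hd Hxy. destruct (Req_dec x y) as [->|Hne]; [lra|].
  assert (exp x < exp y) by (apply exp_increasing; lra).
  assert (d * exp x <= d * exp y) by (apply Rmult_le_compat_l; lra). lra.
Qed.

Lemma g_lt d x y : 0 <= d -> x < y -> x + d * exp x < y + d * exp y.
Proof.
  intros Hd Hxy.
  assert (exp x < exp y) by (apply exp_increasing; lra).
  assert (d * exp x <= d * exp y) by (apply Rmult_le_compat_l; lra). lra.
Qed.

Lemma g_lt_inv d x y : 0 <= d -> x + d * exp x < y + d * exp y -> x < y.
Proof.
  intros Hd H. destruct (Rlt_le_dec x y); auto.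
  pose proof (g_le d y x Hd r). lra.
Qed.

Lemma g_inj d x y : 0 <= d -> x + d * exp x = y + d * exp y -> x = y.
Proof.
  intros Hd H. destruct (Rtotal_order x y) as [h|[h|h]]; auto.
  - pose proof (g_lt d x y Hd h). lra.
  - pose proof (g_lt d y x Hd h). lra.
Qed.

Lemma g_ex d r : 0 < d -> exists x, x + d * exp x = r.
Proof.
  intros Hd.
  set (f := fun x => x + d * exp x - r).
  assert (Hc : continuity f) by (apply derivable_continuous; unfold f; reg).
  set (x0 := Rmin 0 (r - d - 1)).
  assert (Hx0 : f x0 < 0).
  { unfold f; cbv beta. assert (exp x0 <= 1).
    { rewrite <- exp_0. destruct (Req_dec x0 0) as [->|]; [lra|].
      assert (x0 <= 0) by (unfold x0; apply Rmin_l). left; apply exp_increasing. lra. }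
    assert (d * exp x0 <= d) by (rewrite <- (Rmult_1_r d) at 2; apply Rmult_le_compat_l; lra).
    pose proof (Rmin_r 0 (r-d-1)). fold x0 in H1. lra. }
  set (x1 := Rmax (x0 + 1) (r + 1)).
  assert (Hx1 : 0 < f x1).
  { unfold f; cbv beta. pose proof (exp_pos x1). pose proof (Rmax_r (x0+1) (r+1)). fold x1 in H0.
    assert (0 < d * exp x1) by (apply Rmult_lt_0_compat; lra). lra. }
  assert (x0 < x1) by (unfold x1; pose proof (Rmax_l (x0+1) (r+1)); lra).
  destruct (IVT f x0 x1 Hc H Hx0 Hx1) as [z [_ Hz]].
  exists z. unfold f in Hz; cbv beta in Hz. lra.
Qed.

Definition ginv (d r : R) : R := epsilon (inhabits 0) (fun x => x + d * exp x = r).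

Lemma ginv_spec d r : 0 < d -> ginv d r + d * exp (ginv d r) = r.
Proof.
  intros Hd. unfold ginv. apply (epsilon_spec (inhabits 0) (fun x => x + d * exp x = r)).
  apply g_ex; auto.
Qed.

Lemma ginv_lip d r s : 0 < d -> Rabs (ginv d r - ginv d s) <= Rabs (r - s).
Proof.
  intros Hd. pose proof (ginv_spec d r Hd). pose proof (ginv_spec d s Hd).
  set (x := ginv d r) in *. set (y := ginv d s) in *.
  destruct (Rle_dec x y).
  - pose proof (g_le d x y ltac:(lra) r0).
    assert (exp x <= exp y) by (destruct (Req_dec x y) as [->|]; [lra| left; apply exp_increasing; lra]).
    assert (d * exp x <= d * exp y) by (apply Rmult_le_compat_l; lra).
    rewrite (Rabs_left1 (x - y)) by lra. rewrite Rabs_left1 by lra. lra.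
  - assert (exp y <= exp x) by (left; apply exp_increasing; lra).
    assert (d * exp y <= d * exp x) by (apply Rmult_le_compat_l; lra).
    rewrite (Rabs_right (x - y)) by lra. rewrite Rabs_right by lra. lra.
Qed.

Lemma lip_cont (f : R -> R) (L : R) : 0 <= L ->
  (forall x y, Rabs (f x - f y) <= L * Rabs (x - y)) -> continuity f.
Proof.
  intros HL H x. unfold continuity_pt, continue_in, limit1_in, limit_in.
  intros eps Heps. exists (eps / (L + 1)). split.
  - apply Rdiv_lt_0_compat; lra.
  - intros y [_ Hy]. simpl in *. unfold Rdist in *.
    eapply Rle_lt_trans; [apply H|].
    apply Rle_lt_trans with ((L+1) * Rabs (y - x)).
    + pose proof (Rabs_pos (y - x)). nra.
    + apply Rmult_lt_compat_l with (r := L+1) in Hy; [|lra].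
      replace ((L + 1) * (eps / (L + 1))) with eps in Hy by (field; lra). lra.
Qed.

Lemma sumR_cont (h : nat -> R -> R) j :
  (forall i, (1 <= i <= j)%nat -> continuity (h i)) ->
  continuity (fun a => sumR (fun i => h i a) j).
Proof.
  induction j; intros H.
  - simpl. apply continuity_const. intros x y; reflexivity.
  - simpl. apply (continuity_plus (fun a => sumR (fun i => h i a) j) (h (S j))).
    + apply IHj. intros; apply H; lia.
    + apply H; lia.
Qed.

Lemma exp_rw (lam Ap al s t : R) :
  lam * Ap * exp (- (al * (s - t))) = (lam * Ap * exp (- (al * s))) * exp (al * t).
Proof.
  replace (- (al * (s - t))) with (- (al * s) + al * t) by ring.
  rewrite exp_plus. ring.
Qed.

Lemma W_pos (alpha : nat -> R) j : (1 <= j)%nat -> (forall i, (1 <= i)%nat -> 0 < alpha i) ->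
  0 < sumR (fun i => / alpha i) j.
Proof.
  intros Hj Ha. rewrite <- (sumR_zero j). apply sumR_lt; auto.
  intros i Hi. apply Rinv_0_lt_compat, Ha; lia.
Qed.

Lemma equiv_step alpha rho mu sigma lam j a Ap (kS kk : nat -> R) :
  (1 <= j)%nat -> (forall i, (1 <= i)%nat -> 0 < alpha i) -> 0 < a ->
  ((/ a = betaSigma alpha rho mu sigma j + lam
        - (alphaSigma alpha j *
           sumR (fun i => lam * Ap * exp (- (alpha i * (kS i - kk i))) / alpha i) j) * / a)
   /\ (forall i, (1 <= i <= j)%nat ->
        kk i = ((beta alpha rho mu sigma i j + lam) * a - 1) / alpha i
               - lam * Ap * exp (- (alpha i * (kS i - kk i))) / alpha i))
  <->
  ((forall i, (1 <= i <= j)%nat ->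
      alpha i * kk i + lam * Ap * exp (- (alpha i * (kS i - kk i)))
      = (beta alpha rho mu sigma i j + lam) * a - 1)
   /\ sumR kk j = 0).
Proof.
  intros Hj Ha Hapos.
  assert (HK : (forall i, (1 <= i <= j)%nat ->
        kk i = ((beta alpha rho mu sigma i j + lam) * a - 1) / alpha i
               - lam * Ap * exp (- (alpha i * (kS i - kk i))) / alpha i) <->
       (forall i, (1 <= i <= j)%nat ->
      alpha i * kk i + lam * Ap * exp (- (alpha i * (kS i - kk i)))
      = (beta alpha rho mu sigma i j + lam) * a - 1)).
  { split; intros H i Hi; specialize (H i Hi); pose proof (Ha i ltac:(lia)).
    - rewrite H at 1. field. lra.
    - apply (Rmult_eq_reg_l (alpha i)); [|lra].
      replace (alpha i * (((beta alpha rho mu sigma i j + lam) * a - 1) / alpha i -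
          lam * Ap * exp (- (alpha i * (kS i - kk i))) / alpha i))
        with ((beta alpha rho mu sigma i j + lam) * a - 1 - lam * Ap * exp (- (alpha i * (kS i - kk i)))) by (field; lra).
      lra. }
  assert (HS : (forall i, (1 <= i <= j)%nat ->
      alpha i * kk i + lam * Ap * exp (- (alpha i * (kS i - kk i)))
      = (beta alpha rho mu sigma i j + lam) * a - 1) ->
     sumR (fun i => lam * Ap * exp (- (alpha i * (kS i - kk i))) / alpha i) j
     = a * sumR (fun i => beta alpha rho mu sigma i j / alpha i) j + (lam * a - 1) * sumR (fun i => / alpha i) j - sumR kk j).
  { intros H. rewrite <- sumR_lin. apply sumR_ext. intros i Hi.
    specialize (H i Hi). pose proof (Ha i ltac:(lia)).
    replace (lam * Ap * exp (- (alpha i * (kS i - kk i)))) with ((beta alpha rho mu sigma i j + lam) * a - 1 - alpha i * kk i) by lra.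
    field. lra. }
  pose proof (W_pos alpha j Hj Ha) as HW.
  set (W := sumR (fun i => / alpha i) j) in *.
  set (B := sumR (fun i => beta alpha rho mu sigma i j / alpha i) j) in *.
  assert (HaS : alphaSigma alpha j = / W) by reflexivity.
  assert (HbS : betaSigma alpha rho mu sigma j = / W * B) by reflexivity.
  rewrite HK, HaS, HbS.
  split.
  - intros [H1 H2]. split; auto. rewrite (HS H2) in H1.
    set (K := sumR kk j) in *.
    assert (K * / W * / a = 0).
    { replace (K * / W * / a) with
        (/ W * B + lam - / W * (a * B + (lam * a - 1) * W - K) * / a - / a) by (field; lra).
      lra. }
    apply Rmult_integral in H. destruct H as [H|H].
    + apply Rmult_integral in H. destruct H as [H|H]; auto.
      pose proof (Rinv_0_lt_compat W HW). lra.
    + pose proof (Rinv_0_lt_compat a Hapos). lra.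
  - intros [H1 H2]. split; auto. rewrite (HS H1). rewrite H2. field. lra.
Qed.

Section Step.
Variables (alpha bb : nat -> R) (lam blo bhi : R) (j : nat) (Ap : R) (kS : nat -> R).
Hypotheses (Hj : (1 <= j)%nat) (Ha : forall i, (1 <= i)%nat -> 0 < alpha i)
  (Hlam : 0 < lam) (Hlo : 0 < blo)
  (Hb : forall i, (1 <= i <= j)%nat -> blo <= bb i <= bhi)
  (HAp : 0 < Ap) (HB : forall i, (1 <= i <= j)%nat -> Ap * exp (- (alpha i * kS i)) <= / blo).

Let d i := lam * Ap * exp (- (alpha i * kS i)).

Lemma d_pos i : 0 < d i.
Proof. unfold d. pose proof (exp_pos (- (alpha i * kS i))). apply Rmult_lt_0_compat; [nra|lra]. Qed.

Lemma d_le i : (1 <= i <= j)%nat -> d i * blo <= lam.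
Proof.
  intros Hi. unfold d. specialize (HB i Hi).
  assert (Ap * exp (- (alpha i * kS i)) * blo <= 1).
  { apply Rmult_le_compat_r with (r := blo) in HB; [|lra]. rewrite Rinv_l in HB; lra. }
  nra.
Qed.

Definition Red (a : R) (kk : nat -> R) :=
  (forall i, (1 <= i <= j)%nat ->
      alpha i * kk i + lam * Ap * exp (- (alpha i * (kS i - kk i))) = (bb i + lam) * a - 1)
   /\ sumR kk j = 0.

Lemma red_g a kk i : (1 <= i <= j)%nat -> Red a kk ->
  alpha i * kk i + d i * exp (alpha i * kk i) = (bb i + lam) * a - 1.
Proof. intros Hi [H _]. rewrite <- (H i Hi). unfold d. rewrite (exp_rw lam Ap (alpha i) (kS i) (kk i)). ring. Qed.

Lemma neg_of y dd r : 0 < dd -> y + dd * exp y = r -> r <= 0 -> y < 0.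
Proof. intros Hd H Hr. pose proof (exp_pos y). assert (0 < dd * exp y) by (apply Rmult_lt_0_compat; lra). lra. Qed.

Lemma pos_of y dd r : 0 < dd -> y + dd * exp y = r -> dd < r -> 0 < y.
Proof. intros Hd H Hr. apply (g_lt_inv dd); [lra|]. rewrite exp_0. lra. Qed.

Lemma step_exists : exists a kk, 0 < a /\ Red a kk.
Proof.
  set (h := fun i a => ginv (d i) ((bb i + lam) * a - 1) / alpha i).
  set (F := fun a => sumR (fun i => h i a) j).
  assert (HF : continuity F).
  { apply sumR_cont. intros i Hi. pose proof (Ha i ltac:(lia)) as Hai.
    apply (lip_cont _ (Rabs (bb i + lam) / alpha i)).
    - unfold Rdiv; apply Rmult_le_pos; [apply Rabs_pos| left; apply Rinv_0_lt_compat; lra].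
    - intros x y. unfold h.
      replace (ginv (d i) ((bb i + lam) * x - 1) / alpha i - ginv (d i) ((bb i + lam) * y - 1) / alpha i)
        with ((ginv (d i) ((bb i + lam) * x - 1) - ginv (d i) ((bb i + lam) * y - 1)) * / alpha i) by (field; lra).
      rewrite Rabs_mult, Rabs_inv, (Rabs_pos_eq (alpha i)) by lra.
      pose proof (ginv_lip (d i) ((bb i + lam) * x - 1) ((bb i + lam) * y - 1) (d_pos i)).
      replace ((bb i + lam) * x - 1 - ((bb i + lam) * y - 1)) with ((bb i + lam) * (x - y)) in H by ring.
      rewrite Rabs_mult in H.
      pose proof (Rinv_0_lt_compat _ Hai).
      unfold Rdiv. apply Rmult_le_compat_r with (r := / alpha i) in H; [|lra]. nra. }
  assert (Hb1 := Hb 1%nat ltac:(lia)).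
  set (a0 := / (bhi + lam)). set (b0 := 2 / blo).
  assert (Ha0 : (bhi + lam) * a0 = 1) by (unfold a0; field; lra).
  assert (Hb0 : blo * b0 = 2) by (unfold b0; field; lra).
  assert (a0pos : 0 < a0) by (unfold a0; apply Rinv_0_lt_compat; lra).
  assert (Hab : a0 < b0) by nra.
  assert (HFa : F a0 < 0).
  { rewrite <- (sumR_zero j). unfold F. apply sumR_lt; auto. intros i Hi.
    unfold h. pose proof (Ha i ltac:(lia)). pose proof (Hb i Hi).
    pose proof (ginv_spec (d i) ((bb i + lam) * a0 - 1) (d_pos i)).
    assert (ginv (d i) ((bb i + lam) * a0 - 1) < 0).
    { eapply neg_of; [apply d_pos| apply H1 | nra]. }
    unfold Rdiv. pose proof (Rinv_0_lt_compat _ H). nra. }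
  assert (HFb : 0 < F b0).
  { rewrite <- (sumR_zero j). unfold F. apply sumR_lt; auto. intros i Hi.
    unfold h. pose proof (Ha i ltac:(lia)). pose proof (Hb i Hi).
    pose proof (ginv_spec (d i) ((bb i + lam) * b0 - 1) (d_pos i)).
    pose proof (d_le i Hi). pose proof (d_pos i).
    assert (0 < ginv (d i) ((bb i + lam) * b0 - 1)).
    { eapply pos_of; [apply d_pos| apply H1 | ].
      assert (b0 > 0) by nra. nra. }
    unfold Rdiv. pose proof (Rinv_0_lt_compat _ H). nra. }
  destruct (IVT F a0 b0 HF Hab HFa HFb) as [a [[Ha1 _] HFz]].
  exists a, (fun i => h i a). split; [lra|]. split; [|exact HFz].
  intros i Hi. rewrite exp_rw. fold (d i). unfold h. pose proof (Ha i ltac:(lia)).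
  replace (alpha i * (ginv (d i) ((bb i + lam) * a - 1) / alpha i)) with (ginv (d i) ((bb i + lam) * a - 1)) by (field; lra).
  apply ginv_spec, d_pos.
Qed.

Lemma step_bounds a kk : 0 < a -> Red a kk ->
  / (bhi + lam) < a /\ a <= / blo /\
  (forall i, (1 <= i <= j)%nat ->
     a * exp (- (alpha i * kk i)) <= / blo /\ alpha i * kk i <= (bhi + lam) * a - 1).
Proof.
  intros Hapos HR.
  assert (Hb1 := Hb 1%nat ltac:(lia)).
  assert (G : forall i, (1 <= i <= j)%nat -> alpha i * kk i + d i * exp (alpha i * kk i) = (bb i + lam) * a - 1)
    by (intros; apply red_g; auto).
  destruct HR as [_ Hsum].
  split; [|split].
  - destruct (Rlt_le_dec (/ (bhi + lam)) a) as [|Hle]; auto. exfalso.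
    assert (H1 : (bhi + lam) * a <= 1).
    { apply Rmult_le_compat_l with (r := bhi + lam) in Hle; [|lra]. rewrite Rinv_r in Hle; lra. }
    assert (sumR kk j < sumR (fun _ => 0) j).
    { apply sumR_lt; auto. intros i Hi. pose proof (Ha i ltac:(lia)). pose proof (Hb i Hi).
      assert (alpha i * kk i < 0) by (eapply neg_of; [apply d_pos| apply G; auto| nra]). nra. }
    rewrite sumR_zero in H. lra.
  - destruct (Rle_lt_dec a (/ blo)) as [|Hlt]; auto. exfalso.
    assert (H1 : 1 < blo * a).
    { apply Rmult_lt_compat_l with (r := blo) in Hlt; [|lra]. rewrite Rinv_r in Hlt; lra. }
    assert (sumR (fun _ => 0) j < sumR kk j).
    { apply sumR_lt; auto. intros i Hi. pose proof (Ha i ltac:(lia)). pose proof (Hb i Hi).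
      pose proof (d_le i Hi). pose proof (d_pos i).
      assert (0 < alpha i * kk i).
      { eapply pos_of; [apply d_pos| apply G; auto|].
        assert (lam < lam * (blo * a)) by nra. nra. }
      nra. }
    rewrite sumR_zero in H. lra.
  - intros i Hi. pose proof (Ha i ltac:(lia)). pose proof (Hb i Hi).
    pose proof (d_le i Hi). pose proof (d_pos i). specialize (G i Hi).
    set (y := alpha i * kk i) in *.
    pose proof (exp_pos y).
    assert (0 < d i * exp y) by (apply Rmult_lt_0_compat; lra).
    split; [|nra].
    rewrite exp_Ropp.
    destruct (Rle_lt_dec (blo * a) (exp y)) as [Hle|Hlt].
    + apply Rmult_le_reg_l with (r := blo * exp y); [nra|].
      replace (blo * exp y * (a * / exp y)) with (blo * a) by (field; lra).
      replace (blo * exp y * / blo) with (exp y) by (field; lra). lra.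
    + exfalso.
      assert (d i * exp y < lam * a).
      { assert (d i * exp y < d i * (blo * a)) by (apply Rmult_lt_compat_l; lra). nra. }
      assert (Hy : bb i * a - 1 < y) by lra.
      pose proof (exp_ineq1_le (ln (blo * a))) as E1. rewrite exp_ln in E1 by nra.
      assert (E2 : ln (blo * a) < y) by nra.
      apply exp_increasing in E2. rewrite exp_ln in E2 by nra. lra.
Qed.

Lemma step_unique a kk a' kk' : Red a kk -> Red a' kk' ->
  a = a' /\ forall i, (1 <= i <= j)%nat -> kk i = kk' i.
Proof.
  intros R1 R2.
  assert (G1 : forall i, (1 <= i <= j)%nat -> alpha i * kk i + d i * exp (alpha i * kk i) = (bb i + lam) * a - 1)
    by (intros; apply red_g; auto).
  assert (G2 : forall i, (1 <= i <= j)%nat -> alpha i * kk' i + d i * exp (alpha i * kk' i) = (bb i + lam) * a' - 1)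
    by (intros; apply red_g; auto).
  destruct R1 as [_ S1]. destruct R2 as [_ S2].
  assert (Haa : a = a').
  { destruct (Rtotal_order a a') as [Hl|[He|Hl]]; auto; exfalso.
    - assert (sumR kk j < sumR kk' j).
      { apply sumR_lt; auto. intros i Hi. pose proof (Ha i ltac:(lia)). pose proof (Hb i Hi).
        apply (Rmult_lt_reg_l (alpha i)); auto. apply (g_lt_inv (d i)); [left; apply d_pos|].
        rewrite G1, G2 by auto. nra. }
      lra.
    - assert (sumR kk' j < sumR kk j).
      { apply sumR_lt; auto. intros i Hi. pose proof (Ha i ltac:(lia)). pose proof (Hb i Hi).
        apply (Rmult_lt_reg_l (alpha i)); auto. apply (g_lt_inv (d i)); [left; apply d_pos|].
        rewrite G1, G2 by auto. nra. }
      lra. }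
  split; auto. intros i Hi. subst a'. pose proof (Ha i ltac:(lia)).
  apply (Rmult_eq_reg_l (alpha i)); [|lra].
  apply (g_inj (d i)); [left; apply d_pos|]. rewrite G1, G2 by auto. reflexivity.
Qed.

End Step.

Lemma ln_bounds blo bhi lam a y : 0 < blo -> 0 < lam -> blo <= bhi ->
  / (bhi + lam) < a -> a <= / blo -> a * exp (- y) <= / blo -> y <= (bhi + lam) * a - 1 ->
  - ln ((bhi + lam) / blo) <= y <= (bhi + lam) / blo - 1.
Proof.
  intros Hlo Hlam Hlh H1 H2 H3 H4. split.
  - assert (exp (- y) < (bhi + lam) / blo).
    { pose proof (exp_pos (- y)).
      apply Rmult_lt_compat_l with (r := exp (-y)) in H1; auto.
      assert (exp (- y) * / (bhi + lam) < / blo) by lra.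
      apply Rmult_lt_compat_l with (r := bhi + lam) in H0; [|lra].
      replace ((bhi + lam) * (exp (- y) * / (bhi + lam))) with (exp (- y)) in H0 by (field; lra).
      unfold Rdiv. lra. }
    apply ln_increasing in H; [|apply exp_pos]. rewrite ln_exp in H. lra.
  - apply Rmult_le_compat_l with (r := bhi + lam) in H2; [|lra]. unfold Rdiv. lra.
Qed.

Lemma Red_congr alpha bb lam j Ap Ap' kS kS' a kk :
  Ap = Ap' -> (forall i, (1 <= i <= j)%nat -> kS i = kS' i) ->
  Red alpha bb lam j Ap kS a kk -> Red alpha bb lam j Ap' kS' a kk.
Proof.
  intros -> H [H1 H2]. split; auto. intros i Hi. rewrite <- H by auto. auto.
Qed.

Lemma terminal alpha rho mu sigma blo bhi lam T :
  (1 <= T)%nat -> (forall i, (1 <= i)%nat -> 0 < alpha i) -> 0 < lam -> 0 < blo ->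
  (forall i, (1 <= i <= T)%nat -> blo <= beta alpha rho mu sigma i T <= bhi) ->
  let a := / betaSigma alpha rho mu sigma T in
  0 < a /\ / (bhi + lam) < a /\ a <= / blo /\
  forall i, (1 <= i <= T)%nat ->
    a * exp (- (beta alpha rho mu sigma i T * a - 1)) <= / blo /\
    beta alpha rho mu sigma i T * a - 1 <= (bhi + lam) * a - 1.
Proof.
  intros HT Ha Hlam Hlo Hb a.
  pose proof (W_pos alpha T HT Ha) as HW.
  set (W := sumR (fun i => / alpha i) T) in *.
  set (B := sumR (fun i => beta alpha rho mu sigma i T / alpha i) T).
  assert (HbS : betaSigma alpha rho mu sigma T = / W * B) by reflexivity.
  assert (H1 : blo * W <= B).
  { unfold W. rewrite <- sumR_scal. apply sumR_le. intros i Hi.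
    pose proof (Ha i ltac:(lia)). specialize (Hb i Hi). unfold Rdiv.
    apply Rmult_le_compat_r; [left; apply Rinv_0_lt_compat|]; lra. }
  assert (H2 : B <= bhi * W).
  { unfold W. rewrite <- sumR_scal. apply sumR_le. intros i Hi.
    pose proof (Ha i ltac:(lia)). specialize (Hb i Hi). unfold Rdiv.
    apply Rmult_le_compat_r; [left; apply Rinv_0_lt_compat|]; lra. }
  assert (Hb1 := Hb 1%nat ltac:(lia)).
  assert (Hs : blo <= betaSigma alpha rho mu sigma T <= bhi).
  { rewrite HbS. pose proof (Rinv_0_lt_compat _ HW). split.
    - apply Rmult_le_reg_l with (r := W); auto. replace (W * (/ W * B)) with B by (field; lra). lra.
    - apply Rmult_le_reg_l with (r := W); auto. replace (W * (/ W * B)) with B by (field; lra). lra. }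
  set (s := betaSigma alpha rho mu sigma T) in *.
  assert (Has : a * s = 1) by (unfold a; field; lra).
  assert (Hapos : 0 < a) by (unfold a; apply Rinv_0_lt_compat; lra).
  split; [auto|split; [|split]].
  - unfold a. apply Rinv_lt_contravar; nra.
  - unfold a. apply Rinv_le_contravar; lra.
  - intros i Hi. specialize (Hb i Hi). set (bi := beta alpha rho mu sigma i T) in *.
    split; [|nra].
    set (u := bi * a).
    assert (Hu : 0 < u) by (unfold u; nra).
    pose proof (exp_ineq1_le (u - 1)).
    pose proof (exp_pos (u - 1)).
    replace (- (u - 1)) with (- (u - 1)) by ring. rewrite exp_Ropp.
    apply Rmult_le_reg_l with (r := blo * exp (u - 1)); [nra|].
    replace (blo * exp (u - 1) * (a * / exp (u - 1))) with (blo * a) by (field; lra).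
    replace (blo * exp (u - 1) * / blo) with (exp (u - 1)) by (field; lra).
    unfold u in *. nra.
Qed.

Definition Good (N0 m n : nat) (lambda blo : R) (alpha rho : nat -> R)
  (mu sigma : nat -> nat -> R) (A : nat -> R) (k : nat -> nat -> R) : Prop :=
  A (N0 + m)%nat = / betaSigma alpha rho mu sigma (N0 + m)%nat /\
  (forall i : nat, (1 <= i <= N0 + m)%nat ->
     k i (N0 + m)%nat = (beta alpha rho mu sigma i (N0 + m)%nat * A (N0 + m)%nat - 1) / alpha i) /\
  (forall j : nat, (N0 + m - n <= j < N0 + m)%nat ->
     / A j = betaSigma alpha rho mu sigma j + lambda
             - (alphaSigma alpha j *
                sumR (fun i => lambda * A (S j)
                                 * exp (- (alpha i * (k i (S j) - k i j)))
                                 / alpha i) j) * / A j) /\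
  (forall j i : nat, (N0 + m - n <= j < N0 + m)%nat -> (1 <= i <= j)%nat ->
     k i j = ((beta alpha rho mu sigma i j + lambda) * A j - 1) / alpha i
             - lambda * A (S j) * exp (- (alpha i * (k i (S j) - k i j)))
               / alpha i) /\
  (forall j, (N0 + m - n <= j <= N0 + m)%nat -> 0 < A j /\
     forall i, (1 <= i <= j)%nat -> A j * exp (- (alpha i * k i j)) <= / blo).

Theorem lemma3p4 (N0 m : nat) (lambda : R) (alpha rho : nat -> R)
  (mu sigma : nat -> nat -> R) (beta_lo beta_hi : R)
  (HN0 : (1 <= N0)%nat)
  (Hlambda : 0 < lambda)
  (Halpha : forall i : nat, (1 <= i)%nat -> 0 < alpha i)
  (Hrho : forall i : nat, (1 <= i)%nat -> 0 < rho i)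
  (HA1 : forall i : nat, (1 <= i)%nat ->
     (exists M : R, forall j : nat, (N0 <= j)%nat -> (i <= j)%nat ->
        Rabs (mu i j) <= M) /\
     (exists M : R, forall j : nat, (N0 <= j)%nat -> (i <= j)%nat ->
        Rabs (sigma i j) <= M))
  (Hlo : 0 < beta_lo) (Hlohi : beta_lo <= beta_hi)
  (HA2 : forall j i : nat, (N0 <= j)%nat -> (1 <= i <= j)%nat ->
     beta_lo <= beta alpha rho mu sigma i j <= beta_hi) :
  exists (A : nat -> R) (k : nat -> nat -> R),
    IsSolution N0 m lambda alpha rho mu sigma A k /\
    (forall j : nat, (N0 <= j <= N0 + m)%nat -> 0 < A j) /\
    (forall (A' : nat -> R) (k' : nat -> nat -> R),
       IsSolution N0 m lambda alpha rho mu sigma A' k' ->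
       (forall j : nat, (N0 <= j <= N0 + m)%nat -> 0 < A' j) ->
       forall j : nat, (N0 <= j <= N0 + m)%nat ->
         A' j = A j /\ (forall i : nat, (1 <= i <= j)%nat -> k' i j = k i j)) /\
    (forall j : nat, (N0 <= j <= N0 + m)%nat ->
       / (beta_hi + lambda) < A j <= / beta_lo /\
       (forall i : nat, (1 <= i <= j)%nat ->
          A j * exp (- (alpha i * k i j)) <= / beta_lo /\
          - ln ((beta_hi + lambda) / beta_lo) <= alpha i * k i j
            <= (beta_hi + lambda) / beta_lo - 1)).
Proof.
  set (T := (N0 + m)%nat).
  assert (HT : (1 <= T)%nat) by (unfold T; lia).
  assert (HbT : forall i, (1 <= i <= T)%nat -> beta_lo <= beta alpha rho mu sigma i T <= beta_hi)
    by (intros; apply HA2; unfold T in *; lia).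
  pose proof (terminal alpha rho mu sigma beta_lo beta_hi lambda T HT Halpha Hlambda Hlo HbT) as Hterm.
  cbv zeta in Hterm.
  set (aT := / betaSigma alpha rho mu sigma T) in *.
  destruct Hterm as [HaT1 [HaT2 [HaT3 HaT4]]].
  assert (Hbuild : forall n, (n <= m)%nat -> exists A k, Good N0 m n lambda beta_lo alpha rho mu sigma A k).
  { induction n as [|n IH]; intros Hn.
    - exists (fun _ => aT), (fun i _ => (beta alpha rho mu sigma i T * aT - 1) / alpha i).
      fold T. split; [reflexivity|]. split; [reflexivity|].
      split; [intros; lia|]. split; [intros; lia|].
      intros j Hj. assert (j = T) by lia. subst j. split; auto.
      intros i Hi. pose proof (Halpha i ltac:(lia)).
      replace (alpha i * ((beta alpha rho mu sigma i T * aT - 1) / alpha i))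
        with (beta alpha rho mu sigma i T * aT - 1) by (field; lra).
      apply HaT4; auto.
    - destruct (IH ltac:(lia)) as [A [k [G1 [G2 [G3 [G4 G5]]]]]].
      fold T in G1, G2, G3, G4, G5.
      set (J := (T - S n)%nat).
      assert (HJ1 : (1 <= J)%nat) by (unfold J, T in *; lia).
      assert (HSJ : S J = (T - n)%nat) by (unfold J, T in *; lia).
      destruct (G5 (S J) ltac:(unfold J, T in *; lia)) as [HAp HB].
      assert (HbJ : forall i, (1 <= i <= J)%nat -> beta_lo <= beta alpha rho mu sigma i J <= beta_hi)
        by (intros; apply HA2; unfold J, T in *; lia).
      destruct (step_exists alpha (fun i => beta alpha rho mu sigma i J) lambda beta_lo beta_hi J
                  (A (S J)) (fun i => k i (S J)) HJ1 Halpha Hlambda Hlo HbJ HAp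
                  (fun i Hi => HB i ltac:(lia))) as [a [kk [Ha HR]]].
      pose proof (step_bounds alpha (fun i => beta alpha rho mu sigma i J) lambda beta_lo beta_hi J
                  (A (S J)) (fun i => k i (S J)) HJ1 Halpha Hlambda Hlo HbJ HAp
                  (fun i Hi => HB i ltac:(lia)) a kk Ha HR) as [Hb1 [Hb2 Hb3]].
      assert (HE := proj2 (equiv_step alpha rho mu sigma lambda J a (A (S J)) (fun i => k i (S J)) kk HJ1 Halpha Ha) HR).
      exists (fun j => if Nat.eqb j J then a else A j),
             (fun i j => if Nat.eqb j J then kk i else k i j).
      unfold Good; fold T. cbv beta.
      assert (HTJ : T <> J) by (unfold J, T in *; lia).
      split; [destruct (Nat.eqb_spec T J); [lia|exact G1]|].
      split; [destruct (Nat.eqb_spec T J); [lia|exact G2]|].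
      split; [|split; [|]].
      + intros j Hj. destruct (Nat.eqb_spec j J) as [->|Hne].
        * destruct (Nat.eqb_spec (S J) J); [lia|]. exact (proj1 HE).
        * destruct (Nat.eqb_spec (S j) J); [lia|]. apply G3. unfold J, T in *; lia.
      + intros j i Hj Hi. destruct (Nat.eqb_spec j J) as [->|Hne].
        * destruct (Nat.eqb_spec (S J) J); [lia|]. exact (proj2 HE i Hi).
        * destruct (Nat.eqb_spec (S j) J); [lia|]. apply G4; auto. unfold J, T in *; lia.
      + intros j Hj. destruct (Nat.eqb_spec j J) as [->|Hne].
        * split; auto. intros i Hi. apply Hb3; auto.
        * apply G5. unfold J, T in *; lia. }
  destruct (Hbuild m (Nat.le_refl m)) as [A [k [G1 [G2 [G3 [G4 G5]]]]]].
  fold T in G1, G2, G3, G4, G5.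
  replace (T - m)%nat with N0 in G3, G4, G5 by (unfold T; lia).
  assert (HRed : forall j, (N0 <= j < T)%nat ->
     Red alpha (fun i => beta alpha rho mu sigma i j) lambda j (A (S j)) (fun i => k i (S j)) (A j) (fun i => k i j)).
  { intros j Hj. destruct (G5 j ltac:(lia)) as [HAj _].
    apply (proj1 (equiv_step alpha rho mu sigma lambda j (A j) (A (S j)) (fun i => k i (S j)) (fun i => k i j)
             ltac:(lia) Halpha HAj)).
    split; [apply G3; auto| intros i Hi; apply G4; auto]. }
  exists A, k. split; [|split; [|split]].
  - split; [exact G1|]. split; [exact G2|]. split; [exact G3|exact G4].
  - intros j Hj. apply G5. exact Hj.
  - intros A' k' [S1 [S2 [S3 S4]]] HA'.
    fold T in S1, S2, S3, S4, HA'.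
    assert (Hu : forall n, (n <= m)%nat -> forall j, (T - n <= j <= T)%nat ->
              A' j = A j /\ (forall i, (1 <= i <= j)%nat -> k' i j = k i j)).
    { induction n as [|n IH]; intros Hn j Hj.
      - assert (j = T) by lia. subst j. split; [congruence|].
        intros i Hi. rewrite S2, G2 by auto. congruence.
      - destruct (Nat.eq_dec j (T - S n)) as [->|Hne]; [|apply IH; lia].
        set (J := (T - S n)%nat).
        assert (HJ : (N0 <= J < T)%nat) by (unfold J, T in *; lia).
        destruct (IH ltac:(lia) (S J) ltac:(unfold J, T in *; lia)) as [E1 E2].
        assert (HbJ : forall i, (1 <= i <= J)%nat -> beta_lo <= beta alpha rho mu sigma i J <= beta_hi)
          by (intros; apply HA2; lia).
        destruct (G5 (S J) ltac:(lia)) as [HAp _].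
        assert (R' : Red alpha (fun i => beta alpha rho mu sigma i J) lambda J (A' (S J)) (fun i => k' i (S J)) (A' J) (fun i => k' i J)).
        { apply (proj1 (equiv_step alpha rho mu sigma lambda J (A' J) (A' (S J)) (fun i => k' i (S J)) (fun i => k' i J)
             ltac:(lia) Halpha (HA' J ltac:(lia)))).
          split; [apply S3; auto| intros i Hi; apply S4; auto]. }
        apply (Red_congr _ _ _ _ _ (A (S J)) _ (fun i => k i (S J))) in R'; auto.
        2: { intros i Hi. apply E2. lia. }
        destruct (step_unique alpha (fun i => beta alpha rho mu sigma i J) lambda beta_lo beta_hi J
                  (A (S J)) (fun i => k i (S J)) ltac:(lia) Halpha Hlambda Hlo HbJ HAp
                  _ _ _ _ R' (HRed J HJ)) as [U1 U2].
        split; auto. }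
    intros j Hj. apply (Hu m (Nat.le_refl m)). unfold T in *; lia.
  - intros j Hj. destruct (Nat.eq_dec j T) as [->|Hne].
    + rewrite G1. fold aT. split; [split; auto|].
      intros i Hi. pose proof (Halpha i ltac:(lia)).
      rewrite G2, G1 by auto. fold aT.
      replace (alpha i * ((beta alpha rho mu sigma i T * aT - 1) / alpha i))
        with (beta alpha rho mu sigma i T * aT - 1) by (field; lra).
      destruct (HaT4 i Hi) as [X1 X2]. split; auto.
      apply (ln_bounds beta_lo beta_hi lambda aT); auto.
    + assert (Hj' : (N0 <= j < T)%nat) by lia.
      assert (Hbj : forall i, (1 <= i <= j)%nat -> beta_lo <= beta alpha rho mu sigma i j <= beta_hi)
        by (intros; apply HA2; lia).
      destruct (G5 (S j) ltac:(lia)) as [HAp HB].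
      destruct (G5 j ltac:(lia)) as [HAj _].
      destruct (step_bounds alpha (fun i => beta alpha rho mu sigma i j) lambda beta_lo beta_hi j
                  (A (S j)) (fun i => k i (S j)) ltac:(lia) Halpha Hlambda Hlo Hbj HAp
                  (fun i Hi => HB i ltac:(lia)) (A j) (fun i => k i j) HAj (HRed j Hj')) as [B1 [B2 B3]].
      split; [split; auto|].
      intros i Hi. destruct (B3 i Hi) as [X1 X2]. split; auto.
      apply (ln_bounds beta_lo beta_hi lambda (A j)); auto.
Qed.
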